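(* For every positive integer $n$ there exists a permutation of length $2n-1$ that contains every riffle shuffle permutation of length $n$ as a pattern, and there exists a permutation of length $2n-1$ that contains every antiriffle shuffle permutation of length $n$ as a pattern.
   Context: A permutation $\pi$ of length $k$ is a pattern of (is contained in) a permutation $\sigma$ if there are indices $\ell_1<\ell_2<\cdots<\ell_k$ such that for all $i,j$, $\pi_i<\pi_j$ if and only if $\sigma_{\ell_i}<\sigma_{\ell_j}$. The riffle shuffle permutations are the permutations avoiding (not containing as a pattern) each of $321$, $2143$ and $2413$; equivalently, permutations of $\{1,\dots,n\}$ obtained by interleaving the increasing sequences $1,2,\dots,k-1$ and $k,\dots,n$ for some $k$. An antiriffle shuffle permutation is a permutation whose inverse is a riffle shuffle permutation. *)

(* Defs.v *)
From mathcomp Require Import all_boot all_fingroup.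
Set Implicit Arguments. Unset Strict Implicit. Unset Printing Implicit Defensive.

(* A permutation sigma : 'S_m is identified with its one-line word
   i |-> val (sigma i) (values 0..m-1 instead of 1..m; patterns only
   depend on relative order). *)

Definition contains_word (k m : nat) (p : 'I_k -> nat) (s : 'I_m -> nat) : Prop :=
  exists f : 'I_k -> 'I_m,
    (forall i j : 'I_k, i < j -> f i < f j) /\
    (forall i j : 'I_k, p i < p j <-> s (f i) < s (f j)).

Definition perm_word (m : nat) (s : 'S_m) : 'I_m -> nat := fun i => val (s i).

Definition contains (k m : nat) (pi : 'S_k) (sigma : 'S_m) : Prop :=
  contains_word (perm_word pi) (perm_word sigma).

Arguments contains_word : clear implicits.
Arguments contains_word {k m} p s.
Definition pat (w : seq nat) : 'I_(size w) -> nat := fun i => nth 0 w i.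

Arguments pat : clear implicits.
Definition avoids_pat (m : nat) (w : seq nat) (sigma : 'S_m) : Prop :=
  ~ @contains_word (size w) m (pat w) (perm_word sigma).

Definition riffle (m : nat) (sigma : 'S_m) : Prop :=
  avoids_pat [:: 3; 2; 1] sigma /\
  avoids_pat [:: 2; 1; 4; 3] sigma /\
  avoids_pat [:: 2; 4; 1; 3] sigma.

Definition antiriffle (m : nat) (sigma : 'S_m) : Prop := riffle (sigma^-1)%g.

(* Main.v *)
Require Import Defs.
From mathcomp Require Import all_boot all_fingroup.
From mathcomp Require Import zify.

Lemma contains_inv k m (pi : 'S_k) (s : 'S_m) :
  contains pi s -> contains pi^-1%g s^-1%g.
Proof.
case=> f [fmono fiff].
exists (fun v => s (f (pi^-1%g v))); split.
- move=> u v uv; rewrite /perm_word in fiff.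
  have := fiff (pi^-1%g u) (pi^-1%g v); rewrite !permKV => H.
  by apply/H.
- move=> u v; rewrite /perm_word !permK.
  split; first exact: fmono.
  move=> H; case: (ltngtP (pi^-1%g u) (pi^-1%g v)) => // [h|h].
  + have := fmono _ _ h; simpl in H; lia.
  + have e : (pi^-1%g u) = (pi^-1%g v) by apply: val_inj.
    by rewrite e ltnn in H.
Qed.

Section Pat.
Variables (n : nat) (p : 'S_n).
Local Notation v i := (nat_of_ord (p i)).

Lemma no321 : avoids_pat [:: 3; 2; 1] p ->
  forall a b c : 'I_n, ~ (a < b /\ b < c /\ v c < v b /\ v b < v a).
Proof.
move=> H a b c [h1 [h2 [h3 h4]]]; apply: H.
exists (fun x : 'I_3 => nth a [:: a; b; c] x); split.
- move=> [[|[|[|x]]] Hx] [[|[|[|y]]] Hy] //=; lia.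
- rewrite /perm_word /pat.
  move=> [[|[|[|x]]] Hx] [[|[|[|y]]] Hy] //=; lia.
Qed.

Lemma no2143 : avoids_pat [:: 2; 1; 4; 3] p ->
  forall a b c d : 'I_n, ~ (a < b /\ b < c /\ c < d /\
     v b < v a /\ v a < v d /\ v d < v c).
Proof.
move=> H a b c d [h1 [h2 [h3 [h4 [h5 h6]]]]]; apply: H.
exists (fun x : 'I_4 => nth a [:: a; b; c; d] x); split.
- move=> [[|[|[|[|x]]]] Hx] [[|[|[|[|y]]]] Hy] //=; lia.
- rewrite /perm_word /pat.
  move=> [[|[|[|[|x]]]] Hx] [[|[|[|[|y]]]] Hy] //=; lia.
Qed.

Lemma no2413 : avoids_pat [:: 2; 4; 1; 3] p ->
  forall a b c d : 'I_n, ~ (a < b /\ b < c /\ c < d /\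
     v c < v a /\ v a < v d /\ v d < v b).
Proof.
move=> H a b c d [h1 [h2 [h3 [h4 [h5 h6]]]]]; apply: H.
exists (fun x : 'I_4 => nth a [:: a; b; c; d] x); split.
- move=> [[|[|[|[|x]]]] Hx] [[|[|[|[|y]]]] Hy] //=; lia.
- rewrite /perm_word /pat.
  move=> [[|[|[|[|x]]]] Hx] [[|[|[|[|y]]]] Hy] //=; lia.
Qed.

Lemma riffle_inv : riffle p -> forall i j i' j' : 'I_n,
  i < j -> v j < v i -> i' < j' -> v j' < v i' -> v j < v i'.
Proof.
move=> [A [B C]] i j i' j' h1 h2 h3 h4.
have n1 := no321 A i j j'. have n2 := no321 A i i' j'.
have n3 := no2413 C i' i j' j. have n4 := no2143 B i' j' i j.
have inj (a b : 'I_n) : nat_of_ord a = nat_of_ord b -> v a = v b by move=> /val_inj ->.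
have inj' (a b : 'I_n) : v a = v b -> nat_of_ord a = nat_of_ord b.
  by move=> /val_inj /perm_inj ->.
have e1 := inj i i'. have e2 := inj i j'. have e3 := inj j i'. have e4 := inj j j'.
have e5 := inj' i' j.
lia.
Qed.
End Pat.
Definition tv (n q : nat) := if odd q then n + q./2 else q./2.

Lemma tv_lt n q : q < 2*n-1 -> tv n q < 2*n-1.
Proof.
rewrite /tv; have h := odd_double_half q; rewrite -muln2 in h.
case: (odd q) h => /= h; lia.
Qed.

Lemma tv_cmp n a b : a < b -> b <= 2*n-2 ->
  ((tv n a < tv n b) = (~~ odd a || odd b)) /\
  ((tv n b < tv n a) = (odd a && ~~ odd b)).
Proof.
rewrite /tv => h1 h2.
have ha := odd_double_half a; have hb := odd_double_half b.
rewrite -muln2 in ha hb.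
case: (odd a) ha => /= ha; case: (odd b) hb => /= hb; split; apply/idP/idP; lia.
Qed.

Definition tauf n (q : 'I_(2*n-1)) : 'I_(2*n-1) := Ordinal (@tv_lt n q (ltn_ord q)).

Lemma tauf_inj n : injective (@tauf n).
Proof.
move=> x y /(congr1 val) /=; rewrite /tv => e.
apply: val_inj => /=.
have hx := ltn_ord x; have hy := ltn_ord y.
have ha := odd_double_half x; have hb := odd_double_half y.
rewrite -muln2 in ha hb.
move: e; case: (odd x) ha => /= ha; case: (odd y) hb => /= hb; lia.
Qed.

Definition tau n : 'S_(2*n-1) := perm (@tauf_inj n).

Section G.
Variable lab : nat -> bool.
Fixpoint g p := if p is p'.+1 then g p' + (if lab p' == lab p'.+1 then 2 else 1)
  else (if lab 0 then 0 else 1).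

Lemma g_inc p q : p < q -> g p < g q.
Proof.
apply: (@homo_ltn nat g (fun a b => a < b)); first exact: ltn_trans.
move=> i /=; case: (_ == _); lia.
Qed.

Lemma g_odd p : odd (g p) = ~~ lab p.
Proof.
elim: p => [|p IH] /=; first by case: (lab 0).
rewrite oddD IH.
by case: (lab p); case: (lab p.+1).
Qed.

Lemma g_le p : g p <= 2 * p + 1.
Proof. elim: p => [|p IH] /=; first by case: (lab 0). case: (_ == _); lia. Qed.

Lemma g_le2 p t : t <= p -> lab t -> g p <= 2 * p.
Proof.
elim: p t => [|p IH] t.
  by rewrite leqn0 => /eqP -> /= ->.
rewrite leq_eqVlt => /orP [/eqP -> | ht] hl /=.
  case e: (lab p).
    have := IH p (leqnn p) e; rewrite hl /=; lia.
  have := g_le p; rewrite hl /=; lia.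
have := IH t ht hl; case: (_ == _); lia.
Qed.
End G.

Lemma riffle_contained n (p : 'S_n) : 0 < n -> riffle p -> contains p (tau n).
Proof.
move=> hn hr.
have P := @riffle_inv n p hr.
set M := \max_(j : 'I_n | [exists i : 'I_n, (i < j) && (p j < p i)]) (nat_of_ord (p j)).+1.
set k := maxn 1 M.
have key : forall i j : 'I_n, i < j -> (p i < k) = (p j < k) -> p i < p j.
  move=> i j hij e; case: (ltngtP (p i) (p j)) => // [h|h]; last first.
    by move: hij; rewrite (perm_inj (val_inj h)) ltnn.
  have hjM : (nat_of_ord (p j)).+1 <= M.
    apply: (@leq_bigmax_cond _ _ (fun j => (nat_of_ord (p j)).+1) j).
    by apply/existsP; exists i; rewrite hij h.
  have hiM : M <= p i.
    apply/bigmax_leqP => j' /existsP [i' /andP [h1 h2]].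
    exact: (P i' j' i j h1 h2 hij h).
  move: e; rewrite /k; lia.
set lab := fun t => [exists i : 'I_n, (nat_of_ord i == t) && (p i < k)].
have labE : forall i : 'I_n, lab i = (p i < k).
  move=> i; apply/existsP/idP => [[i' /andP [/eqP e h]]|h].
    by rewrite -(val_inj e).
  by exists i; rewrite eqxx h.
have [t [ht1 ht2]] : exists t, t <= n.-1 /\ lab t.
  pose z := Ordinal hn.
  exists ((p^-1)%g z); split; first by have := ltn_ord ((p^-1)%g z); lia.
  by rewrite labE permKV /= /k; lia.
have gb : forall i : 'I_n, g lab i < 2 * n - 1.
  move=> i; have h1 := @g_le2 lab n.-1 t ht1 ht2.
  have h2 : g lab i <= g lab n.-1.
    have := ltn_ord i; rewrite leq_eqVlt; case: (ltngtP i n.-1) => [h|h|->] //.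
      by move=> _; apply: ltnW; apply: g_inc.
    lia.
  lia.
exists (fun i => Ordinal (gb i)); split.
  by move=> i j /= h; apply: g_inc.
have pcmp : forall x y : 'I_n, x < y ->
   ((p x < p y) = (lab x || ~~ lab y)) /\ ((p y < p x) = (~~ lab x && lab y)).
  move=> x y h; rewrite !labE.
  case ex: (p x < k); case ey: (p y < k) => /=.
  - have := key x y h; rewrite ex ey => /(_ erefl) h'; split; apply/idP/idP; lia.
  - split; apply/idP/idP; lia.
  - split; apply/idP/idP; lia.
  - have := key x y h; rewrite ex ey => /(_ erefl) h'; split; apply/idP/idP; lia.
have tcmp : forall x y : 'I_n, x < y ->
   ((tv n (g lab x) < tv n (g lab y)) = (lab x || ~~ lab y)) /\
   ((tv n (g lab y) < tv n (g lab x)) = (~~ lab x && lab y)).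
  move=> x y h; have gy := gb y.
  have [-> ->] := @tv_cmp n (g lab x) (g lab y) (@g_inc lab x y h) ltac:(lia).
  by rewrite !g_odd !negbK.
move=> x y; rewrite /perm_word !permE /=.
case: (ltngtP x y) => h.
- have [-> _] := pcmp x y h; have [-> _] := tcmp x y h; by [].
- have [_ ->] := pcmp y x h; have [_ ->] := tcmp y x h; by [].
- rewrite (val_inj h) !ltnn; by [].
Qed.

Theorem theorem1 (n : nat) (hn : 0 < n) :
  (exists sigma : 'S_(2 * n - 1),
      forall pi : 'S_n, riffle pi -> contains pi sigma) /\
  (exists sigma : 'S_(2 * n - 1),
      forall pi : 'S_n, antiriffle pi -> contains pi sigma).
Proof.
split.
  by exists (tau n) => pi hr; apply: riffle_contained.
exists ((tau n)^-1)%g => pi hr.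
have := @contains_inv _ _ _ _ (@riffle_contained n _ hn hr).
by rewrite invgK.
Qed.
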